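(* Let $d\ge1$ and let $A$ be the adjacency matrix of a tournament of Type (2) with $n=2d$ vertices whose Seidel matrix has spectrum $\{(-\theta)^d,\theta^d\}$ with $\theta>0$. Then $d$ is even and $I+A-A^T$ is a skew Hadamard matrix.
   Context: A tournament on vertex set $V$ is an orientation of the complete graph on $V$; its adjacency matrix $A$ has $A_{xy}=1$ if $x\to y$ and $0$ otherwise, and its Seidel matrix is $S=\sqrt{-1}(A-A^T)$. Let $\tau_1<\cdots<\tau_s$ be the distinct eigenvalues of $S$ with multiplicities $m_i$, and main angles $\beta_i=\frac1{\sqrt n}\|E_ij\|$, where $E_i$ is the orthogonal projection onto the $\tau_i$-eigenspace and $j$ the all-ones vector. The tournament is of Type (1) if $\beta_1=0$; of Type (2) if $\beta_1\neq0$ and $m_1>1$; of Type (3) if $m_1=1$, $\beta_2=0$ and $c_2<0$, where $c_2=n\beta_1^2/(\tau_1-\tau_2)+\sum_{i=3}^s n\beta_i^2/(\tau_i-\tau_2)$; and of Type (4) otherwise. An $n\times n$ $(\pm1)$-matrix $H$ is skew Hadamard if $H+H^T=2I$ and $HH^T=nI$. *)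

(* Defs.v *)
From HB Require Import structures.
From mathcomp Require Import all_boot all_order all_algebra all_field.
Set Implicit Arguments. Unset Strict Implicit. Unset Printing Implicit Defensive.
Import Order.TTheory GRing.Theory Num.Theory.
Local Open Scope ring_scope.

(* A is the (0/1) adjacency matrix of a tournament on 'I_n:
   A x y = 1 iff x -> y; exactly one orientation per pair, no loops. *)
Definition is_tournament_adj (n : nat) (A : 'M[int]_n) : Prop :=
  (forall x y, A x y = 0 \/ A x y = 1) /\
  (forall x, A x x = 0) /\
  (forall x y, x != y -> A x y + A y x = 1).

Definition seidel (n : nat) (A : 'M[int]_n) : 'M[algC]_n :=
  'i *: map_mx (fun z : int => z%:~R) (A - A^T).

Definition ctr (m n : nat) (M : 'M[algC]_(m, n)) : 'M[algC]_(n, m) :=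
  (map_mx (@Num.conj _) M)^T.

Definition onesv (n : nat) : 'cV[algC]_n := const_mx 1.

Definition eig_proj (n : nat) (S : 'M[algC]_n) (t : algC) (E : 'M[algC]_n) : Prop :=
  E *m E = E /\ ctr E = E /\
  (forall v : 'cV[algC]_n, (exists w : 'cV[algC]_n, v = E *m w) <-> S *m v = t *: v).

Definition main_angle (n : nat) (E : 'M[algC]_n) : algC :=
  sqrtC ((ctr (E *m onesv n) *m (E *m onesv n)) 0 0) / sqrtC (n%:R).

Definition type2 (n : nat) (S : 'M[algC]_n) : Prop :=
  exists (t : algC) (E : 'M[algC]_n),
    root (char_poly S) t /\
    (forall r, root (char_poly S) r -> t <= r) /\
    eig_proj S t E /\
    main_angle E != 0 /\
    (1 < mup t (char_poly S))%N.

Definition is_skew_hadamard (n : nat) (H : 'M[int]_n) : Prop :=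
  (forall x y, H x y = 1 \/ H x y = -1) /\
  H + H^T = 2%:M /\
  H *m H^T = (n%:R)%:M.

(* Main.v *)
Require Import Defs.
From HB Require Import structures.
From mathcomp Require Import all_boot all_order all_algebra all_field.
From mathcomp Require Import ring lra zify.
Import Order.TTheory GRing.Theory Num.Theory.
Local Open Scope ring_scope.

Lemma ctrM n (P Q : 'M[algC]_n) : ctr (P *m Q) = ctr Q *m ctr P.
Proof. by rewrite /ctr map_mxM trmx_mul. Qed.

Lemma ctrX n (P : 'M[algC]_n.+1) k : ctr (P ^+ k) = (ctr P) ^+ k.
Proof.
elim: k => [|k IH]; first by rewrite !expr0 /ctr map_mx1 trmx1.
by rewrite exprS -mulmxE ctrM IH exprSr mulmxE.
Qed.

Lemma herm_sq0 n (P : 'M[algC]_n.+1) : ctr P = P -> P * P = 0 -> P = 0.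
Proof.
move=> hP h2; apply/matrixP => i j.
have : (P *m ctr P) i i = 0 by rewrite hP [P *m P]h2 mxE.
rewrite mxE => hs.
have hs' : \sum_k `|P i k| ^+ 2 = 0.
  by rewrite -[RHS]hs; apply: eq_bigr => k _; rewrite normCK /ctr !mxE.
have := psumr_eq0P (fun k _ => exprn_ge0 2 (normr_ge0 (P i k))) hs' (isT : predT j).
by move=> h; move: (h j); rewrite mxE => /eqP; rewrite expf_eq0 /= normr_eq0 => /eqP.
Qed.

Lemma herm_nil n (P : 'M[algC]_n.+1) k : ctr P = P -> P ^+ k.+1 = 0 -> P = 0.
Proof.
move=> hP; elim: k => [|k IH]; first by rewrite expr1.
move=> hk; apply: IH; apply: herm_sq0.
  by rewrite ctrX hP.
by rewrite -exprD addnS -addSn exprD hk mul0r.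
Qed.

Lemma ctrS n (A : 'M[int]_n) : ctr (seidel A) = seidel A.
Proof.
apply/matrixP => i j; rewrite /ctr /seidel !mxE.
rewrite rmorphM rmorph_int /= conjCi -[A i j - A j i]opprB intrN mulrN mulNr.
done.
Qed.

Lemma ctrB n (X Y : 'M[algC]_n) : ctr (X - Y) = ctr X - ctr Y.
Proof. by apply/matrixP => i j; rewrite /ctr !mxE rmorphB. Qed.

Lemma ctrC n (a : algC) : ctr (a%:M : 'M_n) = (a^*)%:M.
Proof. by rewrite /ctr map_scalar_mx tr_scalar_mx. Qed.

Lemma tourM n (A : 'M[int]_n) i k : is_tournament_adj A ->
  (A - A^T) i k * (A - A^T) i k = (k != i)%:R.
Proof.
case=> h01 [hd hs]; rewrite !mxE.
case: (eqVneq k i) => [->|hki]; first by rewrite subrr mulr0.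
have := hs _ _ hki; case: (h01 i k) => ->; case: (h01 k i) => -> //.
Qed.

Lemma key m (A : 'M[int]_m.+1) (theta : algC) d :
  (0 < d)%N -> is_tournament_adj A -> 0 < theta ->
  char_poly (seidel A) = ('X + theta%:P) ^+ d * ('X - theta%:P) ^+ d ->
  (A - A^T) *m (A - A^T)^T = (m%:R)%:M.
Proof.
move=> hd htour hth hchar.
set M := A - A^T.
set S := seidel A.
have hSS : S * S = map_mx (fun z : int => z%:~R) (M *m M^T).
  rewrite /S /seidel -mulmxE -scalemxAl -scalemxAr scalerA -expr2 sqrCi scaleN1r.
  rewrite map_mxM -map_trmx -mulmxN; congr (_ *m _).
  apply/matrixP => i j; rewrite !mxE -intrN; congr (_%:~R); rewrite opprB.
  done.
have hP : (S * S - (theta * theta)%:M) ^+ d = 0.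
  have := Cayley_Hamilton S.
  rewrite hchar -exprMn.
  have -> : ('X + theta%:P) * ('X - theta%:P) = 'X * 'X - (theta * theta)%:P.
    by rewrite polyCM; ring.
  by rewrite rmorphXn rmorphB rmorphM /= horner_mx_X horner_mx_C.
have hPh : ctr (S * S - (theta * theta)%:M) = S * S - (theta * theta)%:M.
  rewrite ctrB ctrC -mulmxE ctrM ctrS rmorphM /= conj_Creal //.
  by rewrite realE ltW.
case: d hd hchar hP => [//|d'] _ _ hP.
have := @herm_nil _ _ _ hPh hP => /eqP; rewrite subr_eq0 => /eqP; rewrite hSS => hmap.
apply/matrixP => i j; case: (eqVneq i j) => [<-|hij].
  rewrite !mxE eqxx mulr1n.
  rewrite (eq_bigr (fun k => (k != i)%:R)); last by move=> k _; rewrite [M^T k i]mxE tourM.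
  rewrite (bigD1 i) //= eqxx add0r.
  under eq_bigr => k hk do rewrite hk.
  by rewrite sumr_const cardC1 card_ord.
have := congr1 (fun X : 'M[algC]_m.+1 => X i j) hmap; rewrite !mxE (negbTE hij) mulr0n.
by move/eqP; rewrite intr_eq0 => /eqP ->.
Qed.

Lemma hada N (A : 'M[int]_N.+1) : is_tournament_adj A ->
  (A - A^T) *m (A - A^T)^T = (N%:R)%:M -> is_skew_hadamard (1%:M + A - A^T).
Proof.
move=> ht hMM; have [h01 [hd hs]] := ht.
split; [|split].
- move=> i j; rewrite !mxE; case: (eqVneq i j) => [<-|hij].
    by rewrite addrK; left.
  have := hs _ _ hij.
  by case: (h01 i j) => ->; case: (h01 j i) => -> //; [right|left].
- apply/matrixP => i j; rewrite !mxE [i == j]eq_sym; case: (j == i) => /=; lia.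
- rewrite -addrA.
  have hMT : (A - A^T)^T = - (A - A^T).
    by apply/matrixP => i j; rewrite !mxE opprB.
  have -> : (1%:M + (A - A^T))^T = 1%:M + (A - A^T)^T.
    by rewrite linearD /= tr_scalar_mx.
  rewrite mulmxDl !mulmxDr mul1mx mulmx1 hMM [in X in _ + X + _]hMT.
  by rewrite mul1mx addrA addrNK -raddfD /= addrC natr1.
Qed.

Lemma even4 N (H : 'M[int]_N) : (2 < N)%N ->
  (forall x y, H x y = 1 \/ H x y = -1) -> H *m H^T = (N%:R)%:M -> (4 %| N)%N.
Proof.
move=> h2 hpm hH.
have h1 : (1 < N)%N by apply: ltnW.
have h0 : (0 < N)%N by apply: ltnW.
pose a := Ordinal h0; pose b := Ordinal h1; pose c := Ordinal h2.
have hHH i j : \sum_k H i k * H j k = ((N%:R)%:M : 'M[int]_N) i j.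
  by rewrite -hH mxE; apply: eq_bigr => k _; rewrite mxE.
have e : \sum_k (H a k + H b k) * (H a k + H c k) = N%:R.
  rewrite (eq_bigr (fun k => H a k * H a k + H a k * H c k + H b k * H a k + H b k * H c k)); last by move=> k _; ring.
  by rewrite !big_split /= !hHH !mxE /= !mulr0n !addr0 mulr1n.
have : (4 %| \sum_k (H a k + H b k) * (H a k + H c k))%Z.
  by apply: rpred_sum => k _; case: (hpm a k) => ->; case: (hpm b k) => ->; case: (hpm c k) => ->.
rewrite e dvdzE (natz N) absz_nat; exact.
Qed.

Theorem lemma4p4 (d : nat) (A : 'M[int]_(d.*2)) (theta : algC) :
  (1 <= d)%N ->
  is_tournament_adj A ->
  type2 (seidel A) ->
  0 < theta ->
  char_poly (seidel A) = ('X + theta%:P) ^+ d * ('X - theta%:P) ^+ d ->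
  ~~ odd d /\ is_skew_hadamard (1%:M + A - A^T).
Proof.
case: d A => [//|d'] A hd htour [t [E [troot [tmin [_ [_ hmup]]]]]] hth hchar.
have eX : 'X + theta%:P = 'X - (- theta)%:P by rewrite polyCN opprK.
have rootn : root (char_poly (seidel A)) (- theta).
  by rewrite hchar eX rootM !root_exp_XsubC eqxx.
have tle := tmin _ rootn.
have ht : t = - theta.
  move: troot; rewrite hchar eX rootM !root_exp_XsubC.
  case/orP => /eqP // te; rewrite te in tle.
  have : - theta < theta by apply: (lt_trans _ hth); rewrite oppr_lt0.
  by move/lt_le_trans => /(_ _ tle); rewrite ltxx.
move: hmup; rewrite ht hchar eX mupM ?expf_neq0 ?polyXsubC_eq0 //.
rewrite !mup_XsubCX eqxx.
have -> : (theta == - theta) = false.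
  apply/negbTE; apply/eqP => h; have := hth; rewrite {1}h oppr_gt0 => h'.
  by move: (lt_trans h' hth); rewrite ltxx.
rewrite addn0 => hd1.
have hMM := @key (d'.*2).+1 A theta d'.+1 isT htour hth hchar.
have hH := @hada (d'.*2).+1 A htour hMM.
split=> //.
have h2 : (2 < d'.+1.*2)%N by rewrite doubleS ltnS ltnS double_gt0.
have [hpm [_ hHH]] := hH.
have /dvdnP [k hk] := @even4 (d'.+1.*2) _ h2 hpm hHH.
have : d'.+1 = (k * 2)%N by move: hk; rewrite -muln2; lia.
by move=> ->; rewrite oddM andbF.
Qed.
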